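(* Let $\Lambda$ be an artin algebra, $n\ge 2$, and let $f\colon X\to Y$ be an irreducible morphism in $\mathbf{C_n}({\rm proj}\,\Lambda)$ with $X$ or $Y$ indecomposable. Then: (a) $f$ is of type (sec) if and only if ${\rm Coker}\,f\in\mathbf{C_n}({\rm proj}\,\Lambda)\setminus\{0\}$; (b) $f$ is of type (ret-irred-sec) if and only if ${\rm Coker}\,f\notin\mathbf{C_n}({\rm proj}\,\Lambda)$; (c) $f$ is of type (ret) if and only if ${\rm Coker}\,f=0$.
   Context: For an artin algebra $\Lambda$ and $n\ge 2$, $\mathbf{C_n}({\rm proj}\,\Lambda)$ is the full subcategory of the category of complexes of finitely generated right $\Lambda$-modules consisting of complexes $X=(X^i,d^i_X)$ with $X^i$ projective for all $i$ and $X^i=0$ for $i\notin\{1,\dots,n\}$; morphisms are chain maps $f=\{f^i\}$. The cokernel ${\rm Coker}\,f$ is the complex $({\rm Coker}\,f^i)$ with induced differentials. A morphism in $\mathbf{C_n}({\rm proj}\,\Lambda)$ is irreducible if it is neither a section nor a retraction, and whenever $f=gh$ then $h$ is a section or $g$ is a retraction. Every irreducible $f=\{f^i\}$ in $\mathbf{C_n}({\rm proj}\,\Lambda)$ is of one of the following types: (sec) every $f^i$ is a section in ${\rm proj}\,\Lambda$; (ret) every $f^i$ is a retraction in ${\rm proj}\,\Lambda$; (ret-irred-sec) there is $i$ with $f^i$ irreducible in ${\rm proj}\,\Lambda$, $f^j$ a section for all $j>i$ and $f^j$ a retraction for all $j<i$. *)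

(* Defs.v *)
(* Right Lambda-modules are modelled as left modules over the
   converse ring Lambda^c (right action  m . a  :=  a *: m). *)
From mathcomp Require Import all_boot all_algebra.
Set Implicit Arguments. Unset Strict Implicit. Unset Printing Implicit Defensive.
Import GRing.Theory.
Local Open Scope ring_scope.

Definition is_ideal (R : comNzRingType) (I : R -> Prop) : Prop :=
  [/\ I 0, (forall x y, I x -> I y -> I (x - y)) & (forall a x, I x -> I (a * x))].

Definition artinian_ring (R : comNzRingType) : Prop :=
  forall I : nat -> R -> Prop,
    (forall k, is_ideal (I k)) ->
    (forall k x, I k.+1 x -> I k x) ->
    exists m, forall k, (m <= k)%N -> forall x, I k x <-> I m x.

Definition fin_gen (A : pzRingType) (M : lmodType A) : Prop :=
  exists s : seq M, forall x : M,
    exists c : 'I_(size s) -> A, x = \sum_(i < size s) c i *: s`_i.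

Definition artin_algebra (R : comNzRingType) (L : algType R) : Prop :=
  artinian_ring R /\ fin_gen L.

Definition surj (S T : Type) (f : S -> T) : Prop := forall y, exists x, f x = y.

Section Modules.
Variable A : pzRingType.  (* A = Lambda^c *)

Definition morph (M N : lmodType A) (f : M -> N) : Prop := linear f.

Definition projective (P : lmodType A) : Prop :=
  forall (M N : lmodType A) (g : M -> N) (h : P -> N),
    morph g -> surj g -> morph h ->
    exists k : P -> M, morph k /\ forall x, g (k x) = h x.

Definition projmod (P : lmodType A) : Prop := fin_gen P /\ projective P.

Definition section_proj (P Q : lmodType A) (f : P -> Q) : Prop :=
  exists g : Q -> P, morph g /\ forall x, g (f x) = x.
Definition retraction_proj (P Q : lmodType A) (f : P -> Q) : Prop :=
  exists g : Q -> P, morph g /\ forall y, f (g y) = y.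
Definition irreducible_proj (P Q : lmodType A) (f : P -> Q) : Prop :=
  [/\ ~ section_proj f, ~ retraction_proj f &
      forall (Z : lmodType A) (h : P -> Z) (g : Z -> Q),
        projmod Z -> morph h -> morph g -> (forall x, f x = g (h x)) ->
        section_proj h \/ retraction_proj g].

Record cpx := Cpx {
  cobj : nat -> lmodType A;
  cd : forall i, cobj i -> cobj i.+1 }.

Definition in_Cn (n : nat) (X : cpx) : Prop :=
  [/\ forall i, morph (@cd X i),
      forall i (x : cobj X i), cd (cd x) = 0,
      forall i, (1 <= i <= n)%N -> projmod (cobj X i) &
      forall i, ~~ (1 <= i <= n)%N -> forall x : cobj X i, x = 0].

Definition cmap (X Y : cpx) := forall i, cobj X i -> cobj Y i.

Definition chain_map (X Y : cpx) (f : cmap X Y) : Prop :=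
  (forall i, morph (f i)) /\
  forall i (x : cobj X i), cd (f i x) = f i.+1 (cd x).

Definition ccomp (X Y Z : cpx) (g : cmap Y Z) (h : cmap X Y) : cmap X Z :=
  fun i x => g i (h i x).

Definition cmap_eq (X Y : cpx) (f g : cmap X Y) : Prop :=
  forall i x, f i x = g i x.

Definition cid (X : cpx) : cmap X X := fun i x => x.

Definition section_C (X Y : cpx) (f : cmap X Y) : Prop :=
  exists g : cmap Y X, chain_map g /\ cmap_eq (ccomp g f) (@cid X).
Definition retraction_C (X Y : cpx) (f : cmap X Y) : Prop :=
  exists g : cmap Y X, chain_map g /\ cmap_eq (ccomp f g) (@cid Y).

Definition irreducible_C (n : nat) (X Y : cpx) (f : cmap X Y) : Prop :=
  [/\ ~ section_C f, ~ retraction_C f &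
      forall (Z : cpx) (h : cmap X Z) (g : cmap Z Y),
        in_Cn n Z -> chain_map h -> chain_map g -> cmap_eq f (ccomp g h) ->
        section_C h \/ retraction_C g].

Definition nonzero_cpx (X : cpx) : Prop := exists i (x : cobj X i), x != 0.

Definition decomposable_C (n : nat) (X : cpx) : Prop :=
  exists (Z1 Z2 : cpx) (i1 : cmap Z1 X) (i2 : cmap Z2 X)
         (p1 : cmap X Z1) (p2 : cmap X Z2),
    [/\ in_Cn n Z1 /\ in_Cn n Z2, nonzero_cpx Z1 /\ nonzero_cpx Z2,
        [/\ chain_map i1, chain_map i2, chain_map p1 & chain_map p2],
        [/\ cmap_eq (ccomp p1 i1) (@cid Z1), cmap_eq (ccomp p2 i2) (@cid Z2),
            (forall i x, p1 i (i2 i x) = 0) & (forall i x, p2 i (i1 i x) = 0)] &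
        forall i x, i1 i (p1 i x) + i2 i (p2 i x) = x].

Definition indecomposable_C (n : nat) (X : cpx) : Prop :=
  nonzero_cpx X /\ ~ decomposable_C n X.

Definition type_sec (n : nat) (X Y : cpx) (f : cmap X Y) : Prop :=
  forall i, (1 <= i <= n)%N -> section_proj (f i).
Definition type_ret (n : nat) (X Y : cpx) (f : cmap X Y) : Prop :=
  forall i, (1 <= i <= n)%N -> retraction_proj (f i).
Definition type_ris (n : nat) (X Y : cpx) (f : cmap X Y) : Prop :=
  exists i, [/\ (1 <= i <= n)%N, irreducible_proj (f i),
    forall j, (i < j <= n)%N -> section_proj (f j) &
    forall j, (1 <= j < i)%N -> retraction_proj (f j)].

Definition is_coker (N M C : lmodType A) (g : N -> M) (q : M -> C) : Prop :=
  [/\ morph q, surj q & forall y, q y = 0 <-> exists x, g x = y].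

Definition coker_zero (X Y : cpx) (f : cmap X Y) : Prop :=
  forall i, surj (f i).

(* Coker f belongs to C_n(proj Lambda): every term Coker f^i is a finitely
   generated projective module (the induced differentials automatically
   square to zero, and terms outside 1..n vanish since those of Y do). *)
Definition coker_in_Cn (n : nat) (X Y : cpx) (f : cmap X Y) : Prop :=
  forall i, exists (C : lmodType A) (q : cobj Y i -> C),
    is_coker (f i) q /\ projmod C.

End Modules.

(* Main.v *)
From HB Require Import structures.
Require Import Defs.
From mathcomp Require Import all_boot all_algebra.
From Stdlib Require Import ClassicalEpsilon Classical.
Set Implicit Arguments. Unset Strict Implicit. Unset Printing Implicit Defensive.
Import GRing.Theory.
Local Open Scope ring_scope.

Section Basics.
Variable A : pzRingType.
Implicit Types M N : lmodType A.

Lemma linB M N (f : M -> N) : morph f -> forall x y, f (x - y) = f x - f y.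
Proof. by move=> hf; apply: (zmod_morphism_linear hf). Qed.
Lemma lin0 M N (f : M -> N) : morph f -> f 0 = 0.
Proof. by move=> hf; rewrite -(subrr 0) (linB hf) subrr. Qed.
Lemma linN M N (f : M -> N) : morph f -> forall x, f (- x) = - f x.
Proof. by move=> hf x; rewrite -sub0r (linB hf) (lin0 hf) sub0r. Qed.
Lemma linD M N (f : M -> N) : morph f -> forall x y, f (x + y) = f x + f y.
Proof. by move=> hf x y; have := linB hf x (- y); rewrite opprK (linN hf) opprK. Qed.
Lemma linZ M N (f : M -> N) : morph f -> forall a x, f (a *: x) = a *: f x.
Proof. by move=> hf a x; rewrite -[a *: x]addr0 hf (lin0 hf) addr0. Qed.

Lemma morph_id M : morph (fun x : M => x).
Proof. by []. Qed.
Lemma morph_comp M N (P : lmodType A) (g : N -> P) (h : M -> N) :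
  morph g -> morph h -> morph (fun x => g (h x)).
Proof. by move=> hg hh a x y; rewrite hh hg. Qed.
Lemma morph_add M N (g h : M -> N) :
  morph g -> morph h -> morph (fun x => g x + h x).
Proof.
move=> hg hh a x y; rewrite hg hh scalerDr.
by rewrite -!addrA; congr (_ + _); rewrite addrCA.
Qed.
Lemma morph0 M N : morph (fun _ : M => (0 : N)).
Proof. by move=> a x y; rewrite scaler0 addr0. Qed.

Definition zeroM M := forall x : M, x = 0.

Lemma zero_projmod M : zeroM M -> projmod M.
Proof.
move=> z; split.
  exists [::] => x; exists (fun i => 0); by rewrite big_ord0 (z x).
move=> M' N' g h hg sg hh; exists (fun _ => 0); split; first exact: morph0.
by move=> x; rewrite (lin0 hg) (z x) (lin0 hh).
Qed.

Lemma surj_proj_retr M N (f : M -> N) :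
  morph f -> surj f -> projective N -> retraction_proj f.
Proof.
move=> hf sf pN.
have [k [hk kP]] := pN M N f (fun x => x) hf sf (@morph_id N).
by exists k.
Qed.

Lemma retr_surj M N (f : M -> N) : retraction_proj f -> surj f.
Proof. by case=> g [_ hg] y; exists (g y). Qed.

Lemma lin_sum M N (f : M -> N) m (F : 'I_m -> M) : morph f ->
  f (\sum_(i < m) F i) = \sum_(i < m) f (F i).
Proof.
move=> hf; apply: (big_morph f (linD hf) (lin0 hf)).
Qed.

Lemma fin_gen_image M N (phi : M -> N) :
  morph phi -> surj phi -> fin_gen M -> fin_gen N.
Proof.
move=> hp sp [s hs]; exists (map phi s) => y.
have [x <-] := sp y; have [c ->] := hs x.
have e : size (map phi s) = size s by rewrite size_map.
exists (fun i => c (cast_ord e i)).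
rewrite (lin_sum _ hp).
rewrite (reindex (cast_ord (esym e))) /=; last first.
  by exists (cast_ord e) => i _; rewrite ?cast_ordK ?cast_ordKV.
apply: eq_bigr => i _; rewrite cast_ordKV (linZ hp); congr (_ *: _).
by rewrite (nth_map 0) //= ltn_ord.
Qed.

Lemma retract_projmod M N (iota : N -> M) (pi : M -> N) :
  projmod M -> morph iota -> morph pi -> (forall c, pi (iota c) = c) -> projmod N.
Proof.
move=> [fg pM] hi hp hpi; split.
  apply: fin_gen_image hp _ fg; by move=> c; exists (iota c).
move=> M' N' g h hg sg hh.
have [k [hk kP]] := pM M' N' g (fun x => h (pi x)) hg sg (morph_comp hh hp).
exists (fun c => k (iota c)); split; first exact: morph_comp.
by move=> c; rewrite kP hpi.
Qed.

Definition castM (F : nat -> lmodType A) (i j : nat) (x : F i) : F j :=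
  match @eqP _ i j with ReflectT e => eq_rect i F x j e | ReflectF _ => 0 end.

Lemma castM_id (F : nat -> lmodType A) i x : @castM F i i x = x.
Proof.
rewrite /castM; case: eqP => // e.
by rewrite (eq_irrelevance e erefl).
Qed.

Lemma castM_morph (F : nat -> lmodType A) i j : morph (@castM F i j).
Proof.
rewrite /castM; case: eqP => [e|_]; last exact: morph0.
by case: j / e.
Qed.

End Basics.
Arguments castM {A} F i j x.
Section Splice.
Variable A : pzRingType.
Variables (P Q : cpx A) (m : nat) (Z : lmodType A).
Variable a : forall j, cobj P j -> Z.
Variable b : forall j, Z -> cobj Q j.+1.
Arguments a : clear implicits.

Definition sp j : lmodType A := if (j < m)%N then cobj P j else if j == m then Z else cobj Q j.

Definition inP j : cobj P j -> sp j :=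
  match (j < m)%N as c return cobj P j -> (if c then cobj P j else if j == m then Z else cobj Q j) with
  | true => fun x => x | false => fun _ => 0 end.
Definition inZ j : Z -> sp j :=
  match (j < m)%N as c return Z -> (if c then cobj P j else if j == m then Z else cobj Q j) with
  | true => fun _ => 0
  | false => match j == m as e return Z -> (if e then Z else cobj Q j) with
             | true => fun x => x | false => fun _ => 0 end end.
Definition inQ j : cobj Q j -> sp j :=
  match (j < m)%N as c return cobj Q j -> (if c then cobj P j else if j == m then Z else cobj Q j) with
  | true => fun _ => 0
  | false => match j == m as e return cobj Q j -> (if e then Z else cobj Q j) with
             | true => fun _ => 0 | false => fun x => x end end.
Definition outP j : sp j -> cobj P j :=
  match (j < m)%N as c return (if c then cobj P j else if j == m then Z else cobj Q j) -> cobj P j with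
  | true => fun x => x | false => fun _ => 0 end.
Definition outZ j : sp j -> Z :=
  match (j < m)%N as c return (if c then cobj P j else if j == m then Z else cobj Q j) -> Z with
  | true => fun _ => 0
  | false => match j == m as e return (if e then Z else cobj Q j) -> Z with
             | true => fun x => x | false => fun _ => 0 end end.
Definition outQ j : sp j -> cobj Q j :=
  match (j < m)%N as c return (if c then cobj P j else if j == m then Z else cobj Q j) -> cobj Q j with
  | true => fun _ => 0
  | false => match j == m as e return (if e then Z else cobj Q j) -> cobj Q j with
             | true => fun _ => 0 | false => fun x => x end end.

Ltac cmp j := rewrite /inP /inZ /inQ /outP /outZ /outQ /sp; case: (ssrnat.ltngtP j m) => //.

Lemma morph_inP j : morph (@inP j). Proof. cmp j => *; exact: morph0. Qed.
Lemma morph_inZ j : morph (@inZ j). Proof. by cmp j => *; exact: morph0. Qed.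
Lemma morph_inQ j : morph (@inQ j). Proof. by cmp j => *; exact: morph0. Qed.
Lemma morph_outP j : morph (@outP j). Proof. cmp j => *; exact: morph0. Qed.
Lemma morph_outZ j : morph (@outZ j). Proof. by cmp j => *; exact: morph0. Qed.
Lemma morph_outQ j : morph (@outQ j). Proof. by cmp j => *; exact: morph0. Qed.
Arguments inP : clear implicits.
Arguments inZ : clear implicits.
Arguments inQ : clear implicits.
Arguments outP : clear implicits.
Arguments outZ : clear implicits.
Arguments outQ : clear implicits.

Lemma outP_inP j x : outP j (inP j x) = if (j < m)%N then x else 0. Proof. by cmp j. Qed.
Lemma outP_inZ j x : outP j (inZ j x) = 0. Proof. by cmp j. Qed.
Lemma outP_inQ j x : outP j (inQ j x) = 0. Proof. by cmp j. Qed.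
Lemma outZ_inP j x : outZ j (inP j x) = 0. Proof. by cmp j. Qed.
Lemma outZ_inZ j x : outZ j (inZ j x) = if j == m then x else 0. Proof. by cmp j. Qed.
Lemma outZ_inQ j x : outZ j (inQ j x) = 0. Proof. by cmp j. Qed.
Lemma outQ_inP j x : outQ j (inP j x) = 0. Proof. by cmp j. Qed.
Lemma outQ_inZ j x : outQ j (inZ j x) = 0. Proof. by cmp j. Qed.
Lemma outQ_inQ j x : outQ j (inQ j x) = if (m < j)%N then x else 0. Proof. by cmp j. Qed.

Lemma outP_0 j (x : sp j) : ~~ (j < m)%N -> outP j x = 0. Proof. by move: x; cmp j. Qed.
Lemma outZ_0 j (x : sp j) : j != m -> outZ j x = 0. Proof. by move: x; cmp j => h x; rewrite eqxx. Qed.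
Lemma outQ_0 j (x : sp j) : ~~ (m < j)%N -> outQ j x = 0. Proof. by move: x; cmp j. Qed.
Lemma inP_0 j x : ~~ (j < m)%N -> inP j x = 0. Proof. by cmp j. Qed.
Lemma inZ_0 j x : j != m -> inZ j x = 0. Proof. by cmp j; rewrite eqxx. Qed.
Lemma inQ_0 j x : ~~ (m < j)%N -> inQ j x = 0. Proof. by cmp j. Qed.

Lemma sp_dec j (x : sp j) : x = inP j (outP j x) + inZ j (outZ j x) + inQ j (outQ j x).
Proof. by move: x; cmp j => h x; rewrite ?addr0 ?add0r. Qed.

Lemma sp_ext j (x y : sp j) :
  outP j x = outP j y -> outZ j x = outZ j y -> outQ j x = outQ j y -> x = y.
Proof. by move=> e1 e2 e3; rewrite (sp_dec x) (sp_dec y) e1 e2 e3. Qed.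

Definition scd j (x : sp j) : sp j.+1 :=
  inP j.+1 (cd (outP j x)) + inZ j.+1 (a j (outP j x)) + inQ j.+1 (b j (outZ j x) + cd (outQ j x)).

Lemma outP_scd j x : outP j.+1 (scd x) = if (j.+1 < m)%N then cd (outP j x) else 0.
Proof. by rewrite /scd !(linD (@morph_outP _)) outP_inP outP_inZ outP_inQ !addr0. Qed.
Lemma outZ_scd j x : outZ j.+1 (scd x) = if j.+1 == m then a j (outP j x) else 0.
Proof. by rewrite /scd !(linD (@morph_outZ _)) outZ_inP outZ_inZ outZ_inQ add0r addr0. Qed.
Lemma outQ_scd j x : outQ j.+1 (scd x) = if (m < j.+1)%N then b j (outZ j x) + cd (outQ j x) else 0.
Proof. by rewrite /scd !(linD (@morph_outQ _)) outQ_inP outQ_inZ outQ_inQ !add0r. Qed.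

Definition W := @Cpx A sp scd.

Lemma W_in_Cn n : in_Cn n P -> in_Cn n Q -> projmod Z -> (1 <= m <= n)%N ->
  (forall j, morph (a j)) -> (forall j, morph (b j)) ->
  (forall j x, j.+2 == m -> a j.+1 (cd x) = 0) ->
  (forall j x, j.+1 == m -> b j.+1 (a j x) = 0) ->
  (forall j z, j == m -> cd (b j z) = 0) -> in_Cn n W.
Proof.
move=> [Pd Pdd Pp Pz] [Qd Qdd Qp Qz] pZ hm ha hb c1 c2 c3.
have PdL j := linD (Pd j); have QdL j := linD (Qd j).
split.
- move=> j /=; rewrite /scd.
  apply: morph_add; first apply: morph_add.
  + apply: morph_comp (@morph_inP _) _; exact: morph_comp (Pd _) (@morph_outP _).
  + apply: morph_comp (@morph_inZ _) _; exact: morph_comp (ha _) (@morph_outP _).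
  + apply: morph_comp (@morph_inQ _) _; apply: morph_add.
      exact: morph_comp (hb _) (@morph_outZ _).
    exact: morph_comp (Qd _) (@morph_outQ _).
- move=> j x /=; apply: sp_ext.
  + rewrite outP_scd outP_scd (lin0 (@morph_outP _)).
    case: ifP => // h; rewrite ifT; first exact: Pdd.
    by apply: ltn_trans h.
  + rewrite outZ_scd outP_scd (lin0 (@morph_outZ _)).
    case: ifP => // /eqP h; rewrite ifT; first by apply: c1; rewrite h.
    by rewrite -h.
  + rewrite outQ_scd outZ_scd outQ_scd (lin0 (@morph_outQ _)).
    case: ifP => // h.
    case: (eqVneq j.+1 m) => e.
      rewrite ifF; last by rewrite e ltnn.
      by rewrite c2 ?e // (lin0 (Qd _)) addr0.
    rewrite (lin0 (hb _)) add0r.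
    have h2 : (m < j.+1)%N by rewrite ltnS leq_eqVlt eq_sym (negbTE e) in h.
    rewrite h2 QdL Qdd addr0.
    case: (eqVneq j m) => e2; first by apply: c3; apply/eqP.
    by rewrite (outZ_0 _ e2) (lin0 (hb _)) (lin0 (Qd _)).
- move=> j hj /=; rewrite /sp; case: ifP => _; first exact: Pp.
  by case: ifP => _; [exact: pZ | exact: Qp].
- move=> j hj x /=; rewrite (sp_dec x).
  have hjm : j != m by apply: contraNneq hj => ->.
  rewrite (Pz _ hj (outP j x)) (Qz _ hj (outQ j x)) (outZ_0 _ hjm).
  by rewrite (lin0 (@morph_inP _)) (lin0 (@morph_inZ _)) (lin0 (@morph_inQ _)) !addr0.
Qed.

Section Maps.
Variable X : cpx A.
Variables (hP : forall j, cobj X j -> cobj P j) (hZ : forall j, cobj X j -> Z)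
          (hQ : forall j, cobj X j -> cobj Q j).
Arguments hP : clear implicits. Arguments hZ : clear implicits. Arguments hQ : clear implicits.

Definition Hin j (x : cobj X j) : cobj W j := inP j (hP j x) + inZ j (hZ j x) + inQ j (hQ j x).
Arguments Hin : clear implicits.

Lemma outP_Hin j x : outP j (Hin j x) = if (j < m)%N then hP j x else 0.
Proof. by rewrite /Hin !(linD (@morph_outP _)) outP_inP outP_inZ outP_inQ !addr0. Qed.
Lemma outZ_Hin j x : outZ j (Hin j x) = if j == m then hZ j x else 0.
Proof. by rewrite /Hin !(linD (@morph_outZ _)) outZ_inP outZ_inZ outZ_inQ add0r addr0. Qed.
Lemma outQ_Hin j x : outQ j (Hin j x) = if (m < j)%N then hQ j x else 0.
Proof. by rewrite /Hin !(linD (@morph_outQ _)) outQ_inP outQ_inZ outQ_inQ !add0r. Qed.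

Lemma Hin_chain :
  (forall j, morph (@cd _ Q j)) -> (forall j, morph (b j)) ->
  (forall j, morph (hP j)) -> (forall j, morph (hZ j)) -> (forall j, morph (hQ j)) ->
  (forall j x, (j.+1 < m)%N -> cd (hP j x) = hP j.+1 (cd x)) ->
  (forall j x, j.+1 == m -> a j (hP j x) = hZ j.+1 (cd x)) ->
  (forall j x, j == m -> b j (hZ j x) = hQ j.+1 (cd x)) ->
  (forall j x, (m < j)%N -> cd (hQ j x) = hQ j.+1 (cd x)) ->
  chain_map Hin.
Proof.
move=> Qd hb mP mZ mQ c1 c2 c3 c4; split.
  move=> j; rewrite /Hin; apply: morph_add; first apply: morph_add.
  - exact: morph_comp (@morph_inP _) (mP _).
  - exact: morph_comp (@morph_inZ _) (mZ _).
  - exact: morph_comp (@morph_inQ _) (mQ _).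
move=> j x /=; apply: sp_ext.
- rewrite outP_scd !outP_Hin; case: ifP => // h.
  by rewrite ifT ?(ltnW h) // c1.
- rewrite outZ_scd outP_Hin outZ_Hin; case: ifP => // /eqP h.
  by rewrite ifT ?c2 -?h ?ltnSn //; apply/eqP.
- rewrite outQ_scd outZ_Hin !outQ_Hin; case: ifP => // h.
  case: (eqVneq j m) => e.
    by subst j; rewrite ltnn (lin0 (Qd _)) addr0 c3.
  have h2 : (m < j)%N by rewrite ltnS leq_eqVlt eq_sym (negbTE e) in h.
  by rewrite h2 (lin0 (hb _)) add0r c4.
Qed.

Lemma Hin_sec : section_C Hin ->
  [/\ forall j, (j < m)%N -> section_proj (hP j), section_proj (hZ m) &
      forall j, (m < j)%N -> section_proj (hQ j)].
Proof.
case=> g [[gm _] gH]; split.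
- move=> j h; exists (fun p => g j (inP j p)); split.
    exact: morph_comp (gm j) (@morph_inP _).
  move=> x; have := gH j x; rewrite /ccomp /cid /Hin.
  rewrite (inZ_0 _ (negbT (ltn_eqF h))) (inQ_0 _ _); last by rewrite -leqNgt ltnW.
  by rewrite !addr0.
- exists (fun p => g m (inZ m p)); split.
    exact: morph_comp (gm m) (@morph_inZ _).
  move=> x; have := gH m x; rewrite /ccomp /cid /Hin.
  by rewrite (inP_0 _ _) ?ltnn // (inQ_0 _ _) ?ltnn // add0r addr0.
- move=> j h; exists (fun p => g j (inQ j p)); split.
    exact: morph_comp (gm j) (@morph_inQ _).
  move=> x; have := gH j x; rewrite /ccomp /cid /Hin.
  rewrite (inP_0 _ _); last by rewrite -leqNgt ltnW.
  by rewrite (inZ_0 _ (negbT (gtn_eqF h))) !add0r.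
Qed.
End Maps.

Section MapsOut.
Variable Y : cpx A.
Variables (gP : forall j, cobj P j -> cobj Y j) (gZ : forall j, Z -> cobj Y j)
          (gQ : forall j, cobj Q j -> cobj Y j).
Arguments gP : clear implicits. Arguments gQ : clear implicits.

Definition Gout j (w : cobj W j) : cobj Y j :=
  gP j (outP j w) + gZ j (outZ j w) + gQ j (outQ j w).
Arguments Gout : clear implicits.

Lemma Gout_chain :
  (forall j, morph (@cd _ Y j)) -> (forall j, morph (a j)) -> (forall j, morph (b j)) ->
  (forall j, morph (@cd _ P j)) -> (forall j, morph (@cd _ Q j)) ->
  (forall j, morph (gP j)) -> (forall j, morph (gZ j)) -> (forall j, morph (gQ j)) ->
  (forall j x, (j.+1 < m)%N -> cd (gP j x) = gP j.+1 (cd x)) ->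
  (forall j x, j.+1 == m -> cd (gP j x) = gZ j.+1 (a j x)) ->
  (forall j z, j == m -> cd (gZ j z) = gQ j.+1 (b j z)) ->
  (forall j x, (m < j)%N -> cd (gQ j x) = gQ j.+1 (cd x)) ->
  chain_map Gout.
Proof.
move=> Yd ha hb Pd Qd mP mZ mQ c1 c2 c3 c4; split.
  move=> j; rewrite /Gout; apply: morph_add; first apply: morph_add.
  - exact: morph_comp (mP _) (@morph_outP _).
  - exact: morph_comp (mZ _) (@morph_outZ _).
  - exact: morph_comp (mQ _) (@morph_outQ _).
move=> j w /=; rewrite /Gout outP_scd outZ_scd outQ_scd.
have YL := linD (Yd j).
case: (ssrnat.ltngtP j m) => h.
- rewrite (outZ_0 _ (negbT (ltn_eqF h))) (outQ_0 _ _); last by rewrite -leqNgt ltnW.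
  have hm : (m < j.+1)%N = false by rewrite ltnNge h.
  rewrite hm; repeat progress rewrite ?(lin0 (mP _)) ?(lin0 (mZ _)) ?(lin0 (mQ _))
     ?(lin0 (Pd _)) ?(lin0 (Qd _)) ?(lin0 (ha _)) ?(lin0 (hb _)) ?if_same ?add0r ?addr0.
  case: (ssrnat.ltngtP j.+1 m) => h2.
  + by repeat progress rewrite ?(lin0 (mZ _)) ?addr0; rewrite c1.
  + by move: h2; rewrite ltnS leqNgt h.
  + by repeat progress rewrite ?(lin0 (mP _)) ?add0r; rewrite c2 // h2.
- rewrite (outZ_0 _ (negbT (gtn_eqF h))) (outP_0 _ _); last by rewrite -leqNgt ltnW.
  have h1 : (j.+1 < m)%N = false by apply/negbTE; rewrite -leqNgt ltnW // ltnW.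
  have h2 : (j.+1 == m) = false by apply/negbTE; rewrite neq_ltn (ltn_trans h) ?orbT.
  have h3 : (m < j.+1)%N by apply: ltn_trans h _.
  rewrite h1 h2 h3; repeat progress rewrite ?(lin0 (mP _)) ?(lin0 (mZ _)) ?(lin0 (mQ _))
     ?(lin0 (Pd _)) ?(lin0 (Qd _)) ?(lin0 (ha _)) ?(lin0 (hb _)) ?if_same ?add0r ?addr0.
  by rewrite c4.
- subst j; rewrite (outP_0 _ _) ?ltnn // (outQ_0 _ _) ?ltnn //.
  rewrite ltnSn eqn_leq ltnn ltnNge leqnSn /=.
  repeat progress rewrite ?(lin0 (mP _)) ?(lin0 (mZ _)) ?(lin0 (mQ _))
     ?(lin0 (Pd _)) ?(lin0 (Qd _)) ?(lin0 (ha _)) ?(lin0 (hb _)) ?if_same ?add0r ?addr0.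
  by rewrite c3.
Qed.

Lemma Gout_retr :
  (forall j, morph (gP j)) -> (forall j, morph (gZ j)) -> (forall j, morph (gQ j)) ->
  retraction_C Gout ->
  [/\ forall j, (j < m)%N -> retraction_proj (gP j), retraction_proj (gZ m) &
      forall j, (m < j)%N -> retraction_proj (gQ j)].
Proof.
move=> mP mZ mQ [s [[sm _] sH]]; split.
- move=> j h; exists (fun y => outP j (s j y)); split.
    exact: morph_comp (@morph_outP _) (sm j).
  move=> y; have := sH j y; rewrite /ccomp /cid /Gout.
  rewrite (outZ_0 _ (negbT (ltn_eqF h))) (outQ_0 _ _); last by rewrite -leqNgt ltnW.
  by rewrite (lin0 (mZ _)) (lin0 (mQ _)) !addr0.
- exists (fun y => outZ m (s m y)); split.
    exact: morph_comp (@morph_outZ _) (sm m).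
  move=> y; have := sH m y; rewrite /ccomp /cid /Gout.
  rewrite (outP_0 _ _) ?ltnn // (outQ_0 _ _) ?ltnn //.
  by rewrite (lin0 (mP _)) (lin0 (mQ _)) add0r addr0.
- move=> j h; exists (fun y => outQ j (s j y)); split.
    exact: morph_comp (@morph_outQ _) (sm j).
  move=> y; have := sH j y; rewrite /ccomp /cid /Gout.
  rewrite (outZ_0 _ (negbT (gtn_eqF h))) (outP_0 _ _); last by rewrite -leqNgt ltnW.
  by rewrite (lin0 (mZ _)) (lin0 (mP _)) !add0r.
Qed.

Lemma Gout_Hin (X : cpx A) (hP : forall j, cobj X j -> cobj P j)
   (hZ : forall j, cobj X j -> Z) (hQ : forall j, cobj X j -> cobj Q j) j x :
  (forall j, morph (gP j)) -> (forall j, morph (gZ j)) -> (forall j, morph (gQ j)) ->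
  Gout j (@Hin X hP hZ hQ j x) =
  (if (j < m)%N then gP j (hP j x) else if j == m then gZ j (hZ j x) else gQ j (hQ j x)).
Proof.
move=> mP mZ mQ; rewrite /Gout outP_Hin outZ_Hin outQ_Hin.
case: (ssrnat.ltngtP j m) => h.
- by rewrite (lin0 (mZ _)) (lin0 (mQ _)) !addr0.
- by rewrite (lin0 (mZ _)) (lin0 (mP _)) !add0r.
- by rewrite (lin0 (mP _)) (lin0 (mQ _)) add0r addr0.
Qed.
End MapsOut.
End Splice.

Record idem (A : pzRingType) (M : lmodType A) := Idem {
  ie :> M -> M; ie_lin : linear ie; ie_idem : forall y, ie (ie y) = ie y }.

Definition fixE (A : pzRingType) (M : lmodType A) (E : idem M) : {pred M} :=
  fun y => E y == y.

Lemma fixE_closed (A : pzRingType) (M : lmodType A) (E : idem M) :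
  subsemimod_closed (fixE E).
Proof.
have hl := ie_lin E.
split; [split|].
- by rewrite unfold_in /fixE (lin0 hl).
- by move=> x y; rewrite !unfold_in /fixE (linD hl) => /eqP -> /eqP ->.
- by move=> a x; rewrite !unfold_in /fixE (linZ hl) => /eqP ->.
Qed.

HB.instance Definition _ (A : pzRingType) (M : lmodType A) (E : idem M) :=
  GRing.isSubmodClosed.Build A M (fixE E) (fixE_closed E).
Definition imgT (A : pzRingType) (M : lmodType A) (E : idem M) := {y : M | y \in fixE E}.
HB.instance Definition _ (A : pzRingType) (M : lmodType A) (E : idem M) :=
  [isSub for (@sval M (fun y => y \in fixE E)) : imgT E -> M].
HB.instance Definition _ (A : pzRingType) (M : lmodType A) (E : idem M) :=
  [Choice of imgT E by <:].
HB.instance Definition _ (A : pzRingType) (M : lmodType A) (E : idem M) :=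
  [SubChoice_isSubLmodule of imgT E by <:].

Section Img.
Variables (A : pzRingType) (M : lmodType A) (E : idem M).

Lemma coE_subproof (y : M) : E y \in fixE E.
Proof. by rewrite unfold_in /fixE ie_idem. Qed.
Definition coE (y : M) : imgT E := exist _ (E y) (coE_subproof y).

Lemma morph_val : morph (fun c : imgT E => val c).
Proof. by move=> a x y; rewrite linearP. Qed.

Lemma morph_coE : morph coE.
Proof.
move=> a x y; apply: val_inj; rewrite (morph_val a) /= (ie_lin E).
by [].
Qed.

Lemma coE_val (c : imgT E) : coE (val c) = c.
Proof.
apply: val_inj => /=; have := valP c; rewrite unfold_in /fixE.
by move/eqP.
Qed.
End Img.

Lemma sec_coker (A : pzRingType) (M N : lmodType A) (f : N -> M) :
  morph f -> section_proj f -> projmod M ->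
  exists (C : lmodType A) (q : M -> C), is_coker f q /\ projmod C.
Proof.
move=> mf [r [mr rf]] pM.
pose e (y : M) := y - f (r y).
have me : linear e.
  move=> a x y; rewrite /e (linD mr) (linZ mr) (linD mf) (linZ mf).
  by rewrite scalerBr opprD -!addrA; congr (_ + _); rewrite addrCA; congr (_ + _).
have ie y : e (e y) = e y.
  by rewrite {1}/e (linB mr) rf subrr (lin0 mf) subr0.
pose E := Idem me ie.
exists (imgT E), (@coE _ _ E); split.
  split; first exact: morph_coE.
    by move=> c; exists (val c); rewrite coE_val.
  move=> y; split.
    move=> /(congr1 val) /=; rewrite ?(lin0 (@morph_val _ _ E)) /= /e => /eqP.
    by rewrite subr_eq0 => /eqP ->; exists (r y).
  case=> x <-; apply: val_inj => /=.
  by rewrite ?(lin0 (@morph_val _ _ E)) /= /e rf subrr.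
apply: retract_projmod pM (@morph_val _ _ E) (@morph_coE _ _ E) _.
exact: coE_val.
Qed.

Section Main.
Variables (A : pzRingType) (n : nat) (X Y : cpx A) (f : cmap X Y).
Arguments f : clear implicits.
Hypotheses (hX : in_Cn n X) (hY : in_Cn n Y) (hf : chain_map f) (irr : irreducible_C n f).

Let Xd := let: And4 d _ _ _ := hX in d.
Let Xdd := let: And4 _ d _ _ := hX in d.
Let Yd := let: And4 d _ _ _ := hY in d.
Let Ydd := let: And4 _ d _ _ := hY in d.
Let fm := hf.1.
Let fc := hf.2.

Lemma C_fact i (hi : (1 <= i <= n)%N) (Zm : lmodType A) (h : cobj X i -> Zm)
   (g : Zm -> cobj Y i) :
  projmod Zm -> morph h -> morph g -> (forall x, f i x = g (h x)) ->
  (section_proj h /\ forall j, (i < j)%N -> section_proj (f j)) \/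
  (retraction_proj g /\ forall j, (j < i)%N -> retraction_proj (f j)).
Proof.
move=> pZ mh mg fgh.
pose a j (x : cobj X j) := h (castM (cobj X) j.+1 i (cd x)).
pose b j (z : Zm) := cd (castM (cobj Y) i j (g z)).
have ma j : morph (a j).
  by rewrite /a; apply: morph_comp => //; apply: morph_comp; [apply: castM_morph | apply: Xd].
have mb j : morph (b j).
  by rewrite /b; apply: morph_comp; [apply: Yd | apply: morph_comp => //; apply: castM_morph].
pose hZ j (x : cobj X j) := h (castM (cobj X) j i x).
pose gZ j (z : Zm) := castM (cobj Y) i j (g z).
have mhZ j : morph (hZ j) by rewrite /hZ; apply: morph_comp => //; apply: castM_morph.
have mgZ j : morph (gZ j) by rewrite /gZ; apply: morph_comp => //; apply: castM_morph.
have Win : in_Cn n (W i a b).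
  apply: W_in_Cn => //.
  - by move=> j x _; rewrite /a Xdd (lin0 (@castM_morph _ _ _ _)) (lin0 mh).
  - move=> j x /eqP e; subst i; rewrite /a /b !castM_id -fgh fc Xdd.
    by rewrite (lin0 (@fm _)).
  - by move=> j z _; rewrite /b Ydd.
have Hch : chain_map (@Hin _ X Y i Zm a b X (fun j x => x) hZ f).
  apply: Hin_chain => //; try by move=> j x _; rewrite fc.
  by move=> j x /eqP e; subst i; rewrite /b /hZ !castM_id -fgh fc.
have Gch : chain_map (@Gout _ X Y i Zm a b Y f gZ (fun j y => y)).
  apply: Gout_chain => //; try by move=> j x _; rewrite fc.
  by move=> j x /eqP e; subst i; rewrite /gZ /a !castM_id -fgh fc.
have Heq : cmap_eq f (ccomp (@Gout _ X Y i Zm a b Y f gZ (fun j y => y))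
                            (@Hin _ X Y i Zm a b X (fun j x => x) hZ f)).
  move=> j x; rewrite /ccomp Gout_Hin //.
  case: ifP => // _; case: ifP => // /eqP e; subst j.
  by rewrite /gZ /hZ !castM_id fgh.
have [_ _ irr3] := irr.
case: (irr3 _ _ _ Win Hch Gch Heq) => [hs | hr].
  have [_ sZ sQ] := Hin_sec hs.
  left; split => //.
  case: sZ => g' [mg' e]; exists g'; split => // x.
  by have := e x; rewrite /hZ castM_id.
have [rP rZ _] := Gout_retr fm mgZ (fun j => @morph_id _ _) hr.
right; split => //.
case: rZ => s' [ms' e]; exists s'; split => // y.
by have := e y; rewrite /gZ castM_id.
Qed.

Lemma D_fact m : (1 <= m)%N -> (m < n)%N -> retraction_proj (f m) ->
  section_proj (f m.+1) ->
  (forall j, (j <= m)%N -> section_proj (f j)) \/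
  (forall j, (m < j)%N -> retraction_proj (f j)).
Proof.
move=> h1 h2 [s [ms fs]] [r [mr rf]].
have [_ _ Yp _] := hY.
have pZ : projmod (cobj Y m) by apply: Yp; rewrite h1 (ltnW h2).
pose a j (y : cobj Y j) := castM (cobj Y) j.+1 m (cd y).
pose b j (z : cobj Y m) := castM (cobj X) m.+1 j.+1 (r (cd z)).
have ma j : morph (a j).
  by rewrite /a; apply: morph_comp; [apply: castM_morph | apply: Yd].
have mb j : morph (b j).
  by rewrite /b; apply: morph_comp; [apply: castM_morph | apply: morph_comp => //; apply: Yd].
pose hZ j (x : cobj X j) := castM (cobj Y) j m (f j x).
pose gZ j (z : cobj Y m) := castM (cobj Y) m j z.
have mhZ j : morph (hZ j) by rewrite /hZ; apply: morph_comp; [apply: castM_morph | apply: fm].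
have mgZ j : morph (gZ j) by rewrite /gZ; apply: castM_morph.
have key z : f m.+1 (r (cd z)) = cd z.
  by rewrite -{1 2}(fs z) fc rf.
have Win : in_Cn n (W m a b).
  apply: W_in_Cn => //; first by rewrite h1 (ltnW h2).
  - by move=> j x _; rewrite /a Ydd (lin0 (@castM_morph _ _ _ _)).
  - by move=> j x /eqP e; subst m; rewrite /a /b !castM_id Ydd (lin0 mr).
  - move=> j z /eqP ->; rewrite /b castM_id.
    by rewrite -(fs z) fc rf Xdd.
have Hch : chain_map (@Hin _ Y X m (cobj Y m) a b X f hZ (fun j x => x)).
  apply: Hin_chain => //; try by move=> j x _; rewrite fc.
  - by move=> j x /eqP e; rewrite /a /hZ fc.
  - by move=> j x /eqP e; subst j; rewrite /b /hZ !castM_id fc rf.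
have Gch : chain_map (@Gout _ Y X m (cobj Y m) a b Y (fun j y => y) gZ f).
  apply: Gout_chain => //; try by move=> j x _; rewrite fc.
  - by move=> j x /eqP e; subst m; rewrite /gZ /a !castM_id.
  - by move=> j z /eqP e; subst j; rewrite /gZ /b !castM_id key.
have Heq : cmap_eq f (ccomp (@Gout _ Y X m (cobj Y m) a b Y (fun j y => y) gZ f)
                            (@Hin _ Y X m (cobj Y m) a b X f hZ (fun j x => x))).
  move=> j x; rewrite /ccomp Gout_Hin; try (by move=> *; apply: morph_id); try exact: mgZ; try exact: fm.
  case: ifP => // _; case: ifP => // /eqP e; subst j.
  by rewrite /gZ /hZ !castM_id.
have [_ _ irr3] := irr.
case: (irr3 _ _ _ Win Hch Gch Heq) => [hs | hr].
  have [sP sZ _] := Hin_sec hs.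
  left => j; rewrite leq_eqVlt => /orP [/eqP -> | /sP //].
  case: sZ => g' [mg' e]; exists g'; split => // x.
  by have := e x; rewrite /hZ castM_id.
have [_ _ rQ] := Gout_retr (fun j => @morph_id _ _) mgZ fm hr.
by right.
Qed.

Let Xz := let: And4 _ _ _ d := hX in d.
Let Yz := let: And4 _ _ _ d := hY in d.
Let Xp := let: And4 _ _ d _ := hX in d.
Let Yp := let: And4 _ _ d _ := hY in d.

Lemma out_range j : ~~ (1 <= j <= n)%N -> section_proj (f j) /\ retraction_proj (f j).
Proof.
move=> hj; split.
  exists (fun _ => 0); split; first exact: morph0.
  by move=> x; rewrite (Xz hj x).
exists (fun _ => 0); split; first exact: morph0.
by move=> y; rewrite (lin0 (@fm _)) (Yz hj y).
Qed.

Lemma irr_of i : (1 <= i <= n)%N -> ~ section_proj (f i) -> ~ retraction_proj (f i) ->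
  irreducible_proj (f i).
Proof.
move=> hi ns nr; split => // Zm h g pZ mh mg e.
by case: (C_fact hi pZ mh mg e) => [[? _]|[? _]]; [left|right].
Qed.

Lemma B_fact i : (1 <= i <= n)%N ->
  (forall j, (i < j)%N -> section_proj (f j)) \/ retraction_proj (f i).
Proof.
move=> hi.
case: (@C_fact i hi (cobj X i) (fun x => x) (f i) (Xp hi) (@morph_id _ _) (@fm _)) => //.
  by move=> [_ ?]; left.
by move=> [? _]; right.
Qed.

Definition pb (Q : Prop) : bool := if excluded_middle_informative Q then true else false.
Lemma pbP (Q : Prop) : pb Q <-> Q.
Proof. by rewrite /pb; case: excluded_middle_informative. Qed.

Lemma classification : type_sec n f \/ type_ris n f \/ type_ret n f.
Proof.
case: (classic (type_sec n f)) => hs; first by left.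
case: (classic (type_ret n f)) => hr; first by right; right.
have [k0 hk0] : exists k, pb (~ retraction_proj (f k)).
  apply: NNPP => H; apply: hr => j _; apply: NNPP => nr; apply: H.
  by exists j; apply/pbP.
have exP : exists k, (fun j => pb (~ retraction_proj (f j))) k by exists k0.
case: (ex_minnP exP) => k /pbP nrk kmin.
have below j : (j < k)%N -> retraction_proj (f j).
  move=> hj; apply: NNPP => nr; have := kmin j ((pbP _).2 nr).
  by rewrite leqNgt hj.
have hk : (1 <= k <= n)%N.
  case: (boolP (1 <= k <= n)%N) => // hk'; by case: (out_range hk') => _ /nrk.
have [i0 [hi0 ni0]] : exists i, (1 <= i <= n)%N /\ ~ section_proj (f i).
  apply: NNPP => H; apply: hs => j hj; apply: NNPP => ns; apply: H.
  by exists j.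
have above : forall j, (k < j)%N -> section_proj (f j).
  by case: (B_fact hk) => // /nrk.
case: (classic (section_proj (f k))) => sk.
  have i0k : (i0 < k)%N.
    rewrite ltn_neqAle; apply/andP; split.
      by apply/eqP => e; apply: ni0; rewrite e.
    by rewrite leqNgt; apply/negP => /above.
  have k2 : (1 < k)%N by apply: leq_ltn_trans i0k; case/andP: hi0.
  have ek : k = k.-1.+1 by rewrite prednK // ltnW.
  have m1 : (1 <= k.-1)%N by rewrite -ltnS -ek.
  have m2 : (k.-1 < n)%N by rewrite -ltnS -ek ltnS; case/andP: hk.
  have rm : retraction_proj (f k.-1) by apply: below; rewrite {2}ek.
  have sm : section_proj (f k.-1.+1) by rewrite -ek.
  case: (D_fact m1 m2 rm sm) => H.
    by exfalso; apply: ni0; apply: H; rewrite -ltnS -ek.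
  by exfalso; apply: nrk; apply: H; rewrite {2}ek.
right; left; exists k; split => //.
- by apply: irr_of.
- by move=> j /andP [] /above.
- by move=> j /andP [] _ /below.
Qed.

Lemma morph_subf (M N : lmodType A) (g h : M -> N) :
  morph g -> morph h -> morph (fun x => g x - h x).
Proof.
move=> mg mh a x y; rewrite mg mh scalerBr opprD -!addrA; congr (_ + _).
by rewrite addrCA.
Qed.

Lemma projY i : projmod (cobj Y i).
Proof.
case: (boolP (1 <= i <= n)%N) => hi; first exact: Yp.
by apply: zero_projmod => y; apply: Yz.
Qed.

Lemma secall : type_sec n f -> forall i, section_proj (f i).
Proof.
move=> hs i; case: (boolP (1 <= i <= n)%N) => hi; first exact: hs.
by case: (out_range hi).
Qed.

Lemma ret_cz : type_ret n f -> coker_zero f.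
Proof.
move=> hr i; case: (boolP (1 <= i <= n)%N) => hi; first exact/retr_surj/hr.
by case: (out_range hi) => _ /retr_surj.
Qed.

Lemma cz_retall : coker_zero f -> forall i, retraction_proj (f i).
Proof. by move=> cz i; apply: surj_proj_retr (@fm _) (cz i) (projY i).2. Qed.

Lemma cz_ret : coker_zero f -> type_ret n f.
Proof. by move=> cz i _; apply: cz_retall. Qed.

Lemma cz_cin : coker_zero f -> coker_in_Cn n f.
Proof.
move=> cz i; exists (cobj X 0), (fun _ => 0); split; last first.
  by apply: zero_projmod => x; apply: Xz.
split; first exact: morph0.
  by move=> c; exists 0; rewrite (Xz _ c).
by move=> y; split => // _; apply: cz.
Qed.

Lemma sec_ncz : type_sec n f -> ~ coker_zero f.
Proof.
move=> hs cz.
pose G i := proj1_sig (constructive_indefinite_description _ (cz_retall cz i)).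
have GP i : morph (G i) /\ forall y, f i (G i y) = y.
  exact: proj2_sig (constructive_indefinite_description _ (cz_retall cz i)).
have Gf i x : G i (f i x) = x.
  case: (secall hs i) => r [_ rf].
  by rewrite -(rf (G i (f i x))) (GP i).2 rf.
have [irr1 _ _] := irr; apply: irr1.
exists G; split; last by move=> i x; rewrite /ccomp /cid Gf.
split; first by move=> i; case: (GP i).
move=> i y; rewrite -{2}((GP i).2 y) fc Gf.
by [].
Qed.

Lemma ris_ncin : type_ris n f -> ~ coker_in_Cn n f.
Proof.
case=> i [hi [ns nr irr3] _ _] hc.
have [C [q [[mq sq kq] pC]]] := hc i.
have [t [mt qt]] := surj_proj_retr mq sq pC.2.
pose p y := y - t (q y).
have mp : morph p by apply: morph_subf => //; apply: morph_comp.
have e x : f i x = p (f i x).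
  rewrite /p; have -> : q (f i x) = 0 by apply/kq; exists x.
  by rewrite (lin0 mt) subr0.
case: (irr3 (cobj Y i) (f i) p (Yp hi) (@fm _) mp e) => // [[u [mu pu]]].
apply: nr; apply: surj_proj_retr (@fm _) _ (Yp hi).2 => y.
apply/kq; rewrite -(pu y) /p (linB mq) qt subrr.
by [].
Qed.

Lemma sec_cin : type_sec n f -> coker_in_Cn n f.
Proof.
move=> hs i; apply: sec_coker (@fm _) (secall hs i) (projY i).
Qed.

Lemma main_equiv :
  [/\ (type_sec n f <-> coker_in_Cn n f /\ ~ coker_zero f),
      (type_ris n f <-> ~ coker_in_Cn n f) &
      (type_ret n f <-> coker_zero f)].
Proof.
have cl := classification.
split; split.
- by move=> hs; split; [apply: sec_cin | apply: sec_ncz].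
- case=> ci ncz; case: cl => [//|[/ris_ncin //|/ret_cz //]].
- exact: ris_ncin.
- move=> nci; case: cl => [/sec_cin //|[//|/ret_cz/cz_cin //]].
- exact: ret_cz.
- move=> cz; case: cl => [/sec_ncz //|[/ris_ncin h|//]].
  by exfalso; apply: h; apply: cz_cin.
Qed.
End Main.

Theorem proposition2p6 (R : comNzRingType) (L : algType R)
    (n : nat) (X Y : cpx L^c) (f : cmap X Y) :
  artin_algebra L ->
  (2 <= n)%N ->
  in_Cn n X -> in_Cn n Y ->
  chain_map f -> irreducible_C n f ->
  (indecomposable_C n X \/ indecomposable_C n Y) ->
  [/\ (type_sec n f <-> coker_in_Cn n f /\ ~ coker_zero f),
      (type_ris n f <-> ~ coker_in_Cn n f) &
      (type_ret n f <-> coker_zero f)].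
Proof.
move=> _ _ hX hY hf irr _.
exact: main_equiv.
Qed.
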